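(* Let $0<a_1<a_2<\cdots<a_n$ be task lengths, $A_i:=a_1+\cdots+a_i$, and for a permutation $\pi$ of $\{1,\dots,n\}$, $A_{\pi(i)}:=a_{\pi(1)}+\cdots+a_{\pi(i)}$. Let $\lambda(t)\ge0$ be the intensity of the disruption process and $p(t):=\lambda(t)e^{-\int_0^t\lambda(u)\,du}$. In the single-failure model, for every permutation $\pi$, $$R_{1:n}(0)-R_{\pi(1):\pi(n)}(0)=\sum_{i=1}^n\left(a_i\int_0^{A_i}p(s)\,ds-a_{\pi(i)}\int_0^{A_{\pi(i)}}p(s)\,ds\right).$$ Moreover: (i) if $p$ is strictly decreasing on $[0,A_n]$, then SPT is optimal, i.e. $R_{1:n}(0)<R_{\pi(1):\pi(n)}(0)$ for every $\pi\neq\mathrm{id}$; (ii) if $p$ is strictly increasing on $[0,A_n]$, then LPT is optimal, i.e. $R_{n:1}(0)<R_{\pi(1):\pi(n)}(0)$ for every $\pi$ with $(\pi(1),\dots,\pi(n))\ne(n,n-1,\dots,1)$.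
   Context: Single-failure model: a single machine processes tasks of lengths $a_{\pi(1)},\dots,a_{\pi(n)}$ in this order starting at time $0$; a task of length $c$ needs $c$ units of uninterrupted processing. At most one disruption occurs: its time $D$ is the first point of a non-homogeneous Poisson process with intensity $\lambda$ (so $D$ has density $p$ on $[0,\infty)$, and possibly $D=\infty$). If $D\ge A_{\pi(n)}$ the batch finishes at time $T=A_{\pi(n)}$; if $A_{\pi(i-1)}\le D<A_{\pi(i)}$ (with $A_{\pi(0)}=0$), the task $a_{\pi(i)}$ in progress is restarted from scratch at time $D$ and it and all remaining tasks are then processed without further disruption, so $T=D+a_{\pi(i)}+\cdots+a_{\pi(n)}$. $R_{\pi(1):\pi(n)}(0):=\mathbb E[T]$; $R_{1:n}$ is the identity order (SPT, increasing lengths) and $R_{n:1}$ the order $a_n,\dots,a_1$ (LPT, decreasing lengths). *)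

(* Defs.v *)
From Stdlib Require Import Reals Lra List Permutation.
From Coquelicot Require Import Coquelicot.
Open Scope R_scope.

Definition sumR (l : list R) : R := fold_right Rplus 0 l.

(* Tasks are indexed 0..n-1 (paper: 1..n); a processing order is a list
   [pi(1); ...; pi(n)] of task indices which is a permutation of [0..n-1]. *)

(* Completion time T of the batch with task lengths [cs] (in processing
   order), the batch (re)starting at time [start], when the (single)
   disruption occurs at time D >= start:
   - the first task c whose processing interval [start', start'+c) contains D
     is restarted at D and it and all remaining tasks are processed without
     further disruption: T = D + c + (sum of remaining lengths);
   - if D is at or after the end of the last task, T = start + total. *)
Fixpoint completion (cs : list R) (start D : R) : R :=
  match cs with
  | nil => start
  | c :: r => if Rlt_dec D (start + c) then D + c + sumR r
              else completion r (start + c) D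
  end.

Definition Lam (lam : R -> R) (t : R) : R := RInt lam 0 t.

(* Density of the first point D of the NHPP: p(t) = lambda(t) e^{-Lambda(t)}. *)
Definition dens (lam : R -> R) (t : R) : R := lam t * exp (- Lam lam t).

Definition lens (a : nat -> R) (l : list nat) : list R := map a l.

Definition Apref (a : nat -> R) (l : list nat) (k : nat) : R :=
  sumR (firstn k (lens a l)).

(* R_{pi(1):pi(n)}(0) = E[T], where D has density p on [0, oo) and
   P(D >= t) = e^{-Lambda(t)} (possibly D = oo). Since T = A_{pi(n)} whenever
   D >= A_{pi(n)}:
   E[T] = int_0^{A_{pi(n)}} T(s) p(s) ds + A_{pi(n)} * P(D >= A_{pi(n)}). *)
Definition ET (a : nat -> R) (lam : R -> R) (l : list nat) : R :=
  let An := sumR (lens a l) in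
  RInt (fun s => completion (lens a l) 0 s * dens lam s) 0 An
  + An * exp (- Lam lam An).

(* Main.v *)
Require Import Defs.
From Stdlib Require Import Reals Lra Lia List Permutation Sorting.
From Coquelicot Require Import Coquelicot.
Open Scope R_scope.

Lemma floor_spec (x : R) : IZR (floor x) <= x < IZR (floor x) + 1.
Proof. unfold floor; destruct (floor_ex x); simpl; auto. Qed.

Lemma floor_unique (x : R) (n : Z) : IZR n <= x < IZR n + 1 -> floor x = n.
Proof.
  intros [H1 H2]. pose proof (floor_spec x) as [H3 H4].
  assert (A : (floor x < n + 1)%Z) by (apply lt_IZR; rewrite plus_IZR; simpl; lra).
  assert (B : (n < floor x + 1)%Z) by (apply lt_IZR; rewrite plus_IZR; simpl; lra).
  lia.
Qed.

Lemma ex_RInt_sub (f : R -> R) a b c d : a <= c -> c <= d -> d <= b ->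
  ex_RInt f a b -> ex_RInt f c d.
Proof.
  intros. apply (ex_RInt_Chasles_2 (V:=R_CompleteNormedModule) f a c d). lra.
  apply (ex_RInt_Chasles_1 (V:=R_CompleteNormedModule) f a d b). lra. auto.
Qed.

Lemma mult_lip (f g : R -> R) (a b : R) : a <= b -> ex_RInt f a b ->
  (exists L, forall x y, a <= x <= b -> a <= y <= b -> Rabs (g x - g y) <= L * Rabs (x - y)) ->
  ex_RInt (fun x => f x * g x) a b.
Proof.
  intros Hab Hf [L0 HL0].
  destruct (Req_dec a b) as [<-|Hne].
  { exists zero. apply is_RInt_point. }
  assert (Hlt : a < b) by lra. clear Hab Hne.
  set (L := Rmax L0 0).
  assert (HL : forall x y, a <= x <= b -> a <= y <= b -> Rabs (g x - g y) <= L * Rabs (x - y)).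
  { intros x y Hx Hy. eapply Rle_trans. apply HL0; auto.
    apply Rmult_le_compat_r. apply Rabs_pos. apply Rmax_l. }
  assert (L_pos : 0 <= L) by apply Rmax_r.
  clearbody L. clear HL0 L0.
  destruct (ex_RInt_ub f a b Hf) as [M0 HM0].
  set (M := Rmax M0 0).
  assert (HM : forall t, a <= t <= b -> Rabs (f t) <= M).
  { intros t Ht. eapply Rle_trans. apply (HM0 t). rewrite Rmin_left, Rmax_right; lra. apply Rmax_l. }
  assert (M_pos : 0 <= M) by apply Rmax_r.
  clearbody M. clear HM0 M0.
  set (f0 := fun x => if Rle_dec a x then if Rle_dec x b then f x else 0 else 0).
  set (h := fun N : nat => (b - a) / INR (S N)).
  assert (hpos : forall N, 0 < h N).
  { intro N. unfold h. apply Rdiv_lt_0_compat. lra. apply lt_0_INR; lia. }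
  set (gN := fun (N : nat) x => g (a + h N * IZR (floor ((x - a) / h N)))).
  assert (Step1 : forall N k, (k <= S N)%nat -> ex_RInt (fun x => f0 x * gN N x) a (a + INR k * h N)).
  { intros N k. induction k as [|k IH]; intros Hk.
    - replace (a + INR 0 * h N) with a by (simpl; ring). exists zero. apply is_RInt_point.
    - assert (Hkb : a + INR (S k) * h N <= b).
      { unfold h.
        apply Rle_trans with (a + INR (S N) * ((b - a) / INR (S N))).
        apply Rplus_le_compat_l. apply Rmult_le_compat_r.
        apply Rdiv_le_0_compat. lra. apply lt_0_INR; lia.
        apply le_INR; lia.
        right. field. apply not_0_INR; lia. }
      assert (hN := hpos N).
      assert (Sk : INR (S k) = INR k + 1) by (rewrite S_INR; ring).
      assert (k0 : 0 <= INR k) by apply pos_INR.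
      assert (kh : 0 <= INR k * h N) by (apply Rmult_le_pos; lra).
      assert (Skh : INR (S k) * h N = INR k * h N + h N) by (rewrite Sk; ring).
      apply ex_RInt_Chasles with (a + INR k * h N).
      + apply IH; lia.
      + apply ex_RInt_ext with (fun x => scal (g (a + h N * INR k)) (f x)).
        * intros x Hx. rewrite Rmin_left in Hx by lra.
          rewrite Rmax_right in Hx by lra.
          unfold f0, gN. destruct (Rle_dec a x); [|exfalso; lra].
          destruct (Rle_dec x b); [|exfalso; lra].
          rewrite (floor_unique _ (Z.of_nat k)).
          rewrite <- INR_IZR_INZ. unfold scal; simpl. unfold mult; simpl. ring.
          rewrite <- INR_IZR_INZ. split.
          -- apply Rmult_le_reg_r with (h N); auto. unfold Rdiv. rewrite Rmult_assoc, Rinv_l by lra. rewrite Skh in Hx. lra.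
          -- apply Rmult_lt_reg_r with (h N); auto. unfold Rdiv. rewrite Rmult_assoc, Rinv_l by lra. rewrite Skh in Hx. lra.
        * apply (@ex_RInt_scal R_NormedModule f). apply ex_RInt_sub with a b; auto; lra. }
  assert (Hend : forall N, a + INR (S N) * h N = b).
  { intro N. unfold h. field. apply not_0_INR; lia. }
  assert (Step2 : forall N x, Rabs (f0 x * gN N x - f0 x * g x) <= M * L * h N).
  { intros N x. assert (hN := hpos N). unfold f0.
    destruct (Rle_dec a x) as [Hax|]; [destruct (Rle_dec x b) as [Hxb|]|];
      try (rewrite !Rmult_0_l, Rminus_0_r, Rabs_R0; apply Rmult_le_pos; [apply Rmult_le_pos|]; lra).
    unfold gN. set (m := floor ((x - a) / h N)).
    pose proof (floor_spec ((x - a) / h N)) as [F1 F2]. fold m in F1, F2.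
    assert (E : (x - a) / h N * h N = x - a) by (field; lra).
    assert (G1 : h N * IZR m <= x - a) by nra.
    assert (G2 : x - a < h N * IZR m + h N) by nra.
    assert (G3 : 0 <= IZR m).
    { assert (0 <= (x - a) / h N) by (apply Rdiv_le_0_compat; lra).
      assert (-1 < m)%Z by (apply lt_IZR; lra). apply IZR_le. lia. }
    rewrite <- Rmult_minus_distr_l, Rabs_mult, Rmult_assoc.
    apply Rmult_le_compat; try apply Rabs_pos. apply HM; lra.
    rewrite <- Rabs_Ropp, Ropp_minus_distr.
    eapply Rle_trans. apply HL; nra.
    apply Rmult_le_compat_l; auto. rewrite Rabs_right by nra. nra. }
  assert (Conv : filterlim (fun N x => f0 x * gN N x) eventually (locally (fun x => f0 x * g x))).
  { intros P [eps HP]. unfold filtermap.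
    destruct (INR_unbounded (M * L * (b - a) / eps)) as [N0 HN0].
    exists N0. intros N HN. apply HP. intro t.
    unfold ball; simpl; unfold AbsRing_ball, abs, minus, plus, opp; simpl.
    eapply Rle_lt_trans. apply Step2.
    assert (INR N0 <= INR N) by (apply le_INR; lia).
    assert (ep := cond_pos eps).
    unfold h. rewrite S_INR.
    assert (0 < INR N + 1) by (pose proof (pos_INR N); lra).
    assert (M * L * (b - a) < eps * (INR N + 1)).
    { apply Rmult_lt_reg_r with (/ eps). apply Rinv_0_lt_compat; lra.
      replace (eps * (INR N + 1) * / eps) with (INR N + 1) by (field; lra). unfold Rdiv in HN0. lra. }
    replace (M * L * ((b - a) / (INR N + 1))) with (M * L * (b - a) / (INR N + 1)) by (field; lra).
    apply Rmult_lt_reg_r with (INR N + 1); auto.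
    replace (M * L * (b - a) / (INR N + 1) * (INR N + 1)) with (M * L * (b - a)) by (field; lra). lra. }
  destruct (filterlim_RInt (fun N x => f0 x * gN N x) a b eventually eventually_filter
     (fun x => f0 x * g x) (fun N => RInt (fun x => f0 x * gN N x) a b)) as [If [_ HIf]].
  { intro N. apply RInt_correct. rewrite <- (Hend N). apply Step1. lia. }
  { exact Conv. }
  exists If. apply is_RInt_ext with (fun x => f0 x * g x); auto.
  intros x Hx. rewrite Rmin_left, Rmax_right in Hx by lra. unfold f0.
  destruct (Rle_dec a x); [|lra]. destruct (Rle_dec x b); [|lra]. reflexivity.
Qed.

Fixpoint Qf (p : R -> R) (cs : list R) (st : R) : R :=
  match cs with
  | nil => 0
  | c :: r => c * RInt p 0 (st + c) + Qf p r (st + c)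
  end.
Lemma sumR_nonneg l : (forall c, In c l -> 0 <= c) -> 0 <= sumR l.
Proof.
  induction l as [|x l IH]; simpl; intros H. lra.
  assert (0 <= x) by auto. assert (0 <= sumR l) by auto. lra.
Qed.

Lemma RInt_sub_eq (f : R -> R) Tot u v : 0 <= u -> u <= v -> v <= Tot -> ex_RInt f 0 Tot ->
  RInt f u v = RInt f 0 v - RInt f 0 u.
Proof.
  intros. assert (H3 := RInt_Chasles (V:=R_CompleteNormedModule) f 0 u v
    ltac:(apply ex_RInt_sub with 0 Tot; auto; lra) ltac:(apply ex_RInt_sub with 0 Tot; auto; lra)).
  unfold plus in H3; simpl in H3. change (RInt f u v = RInt f 0 v - RInt f 0 u). lra.
Qed.

Lemma compl_int (p : R -> R) Tot (Hp : ex_RInt p 0 Tot) (Hsp : ex_RInt (fun s => s * p s) 0 Tot) :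
  forall cs st, (forall c, In c cs -> 0 <= c) -> 0 <= st -> st + sumR cs <= Tot ->
  is_RInt (fun s => completion cs st s * p s) st (st + sumR cs)
    (RInt (fun s => s * p s) 0 (st + sumR cs) - RInt (fun s => s * p s) 0 st
     - (st + sumR cs) * RInt p 0 st + st * RInt p 0 st + Qf p cs st).
Proof.
  induction cs as [|c r IH]; intros st Hpos Hst Htot.
  - simpl. rewrite Rplus_0_r.
    replace (RInt (fun s => s * p s) 0 st - RInt (fun s => s * p s) 0 st - st * RInt p 0 st +
     st * RInt p 0 st + 0) with (@zero R_NormedModule) by (unfold zero; simpl; ring).
    apply is_RInt_point.
  - simpl in Htot |- *.
    assert (c0 : 0 <= c) by (apply Hpos; simpl; auto).
    assert (rpos : forall c, In c r -> 0 <= c) by (intros; apply Hpos; simpl; auto).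
    assert (sr := sumR_nonneg r rpos).
    assert (H2 := IH (st + c) rpos ltac:(lra) ltac:(lra)).
    replace (st + (c + sumR r)) with (st + c + sumR r) by ring.
    set (K := c + sumR r).
    assert (H1 : is_RInt (fun s => completion (c :: r) st s * p s) st (st + c)
       ((RInt (fun s => s * p s) 0 (st + c) - RInt (fun s => s * p s) 0 st)
        + K * (RInt p 0 (st + c) - RInt p 0 st))).
    { apply is_RInt_ext with (fun s => plus (s * p s) (scal K (p s))).
      - intros x Hx. rewrite Rmin_left, Rmax_right in Hx by lra. simpl.
        destruct (Rlt_dec x (st + c)); [|lra]. unfold plus, scal; simpl; unfold mult; simpl.
        unfold K. ring.
      - apply (@is_RInt_plus R_NormedModule).
        + rewrite <- (RInt_sub_eq _ Tot) by (auto; lra). apply (RInt_correct (V:=R_CompleteNormedModule)).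
          apply ex_RInt_sub with 0 Tot; auto; lra.
        + apply (@is_RInt_scal R_NormedModule).
          rewrite <- (RInt_sub_eq _ Tot) by (auto; lra). apply (RInt_correct (V:=R_CompleteNormedModule)).
          apply ex_RInt_sub with 0 Tot; auto; lra. }
    assert (H2' : is_RInt (fun s => completion (c :: r) st s * p s) (st + c) (st + c + sumR r)
     (RInt (fun s => s * p s) 0 (st + c + sumR r) - RInt (fun s => s * p s) 0 (st + c) -
      (st + c + sumR r) * RInt p 0 (st + c) + (st + c) * RInt p 0 (st + c) + Qf p r (st + c))).
    { apply is_RInt_ext with (fun s => completion r (st + c) s * p s); auto.
      intros x Hx. rewrite Rmin_left, Rmax_right in Hx by lra. simpl.
      destruct (Rlt_dec x (st + c)); [lra|]. reflexivity. }
    assert (H := is_RInt_Chasles _ _ _ _ _ _ H1 H2').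
    unfold plus in H; simpl in H.
    match goal with |- is_RInt _ _ _ ?v => replace v with
      ((RInt (fun s => s * p s) 0 (st + c) - RInt (fun s => s * p s) 0 st
        + K * (RInt p 0 (st + c) - RInt p 0 st)) +
       (RInt (fun s => s * p s) 0 (st + c + sumR r) - RInt (fun s => s * p s) 0 (st + c) -
        (st + c + sumR r) * RInt p 0 (st + c) + (st + c) * RInt p 0 (st + c) + Qf p r (st + c))) end.
    exact H.
    unfold K. ring.
Qed.

Lemma sumR_perm l1 l2 : Permutation l1 l2 -> sumR l1 = sumR l2.
Proof. induction 1; simpl in *; lra. Qed.

Lemma sumR_pos l : (forall c, In c l -> 0 < c) -> 0 <= sumR l.
Proof.
  induction l as [|x l IH]; simpl; intros H. lra.
  assert (0 < x) by auto. assert (0 <= sumR l) by auto. lra.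
Qed.

Lemma SS_remove (ord : R -> R -> Prop) l1 x l2 :
  StronglySorted ord (l1 ++ x :: l2) -> StronglySorted ord (l1 ++ l2).
Proof.
  induction l1 as [|y l1 IH]; simpl; intros H.
  - apply StronglySorted_inv in H. tauto.
  - apply StronglySorted_inv in H as [H1 H2]. constructor. auto.
    rewrite Forall_forall in *. intros z Hz. apply H2.
    apply in_app_or in Hz. apply in_or_app. simpl. tauto.
Qed.

Lemma Qf_sorted (p : R -> R) (Tot : R) (ord : R -> R -> Prop)
  (Hswap : forall B x y, 0 <= B -> 0 < x -> 0 < y -> B + x + y <= Tot -> ord y x ->
     y * RInt p 0 (B + y) + x * RInt p 0 (B + x + y) < x * RInt p 0 (B + x) + y * RInt p 0 (B + x + y)) :
  forall n cs ss B, length cs = n -> Permutation cs ss -> StronglySorted ord ss ->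
   (forall c, In c cs -> 0 < c) -> 0 <= B -> B + sumR cs <= Tot ->
   Qf p ss B <= Qf p cs B /\ (cs <> ss -> Qf p ss B < Qf p cs B).
Proof.
  induction n as [|n IH]; intros cs ss B Hlen Hperm Hsort Hpos HB Htot.
  - destruct cs; [|simpl in Hlen; lia].
    apply Permutation_nil in Hperm. subst. simpl. split. lra. tauto.
  - destruct cs as [|x r]; [simpl in Hlen; lia|].
    destruct ss as [|y ss']; [apply Permutation_sym, Permutation_nil in Hperm; discriminate|].
    simpl in Hlen, Htot.
    assert (x0 : 0 < x) by (apply Hpos; simpl; auto).
    assert (rpos : forall c, In c r -> 0 < c) by (intros; apply Hpos; simpl; auto).
    assert (sr := sumR_pos r rpos).
    apply StronglySorted_inv in Hsort as [Hs' Hord].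
    destruct (Req_dec x y) as [<-|Hxy].
    + apply Permutation_cons_inv in Hperm.
      destruct (IH r ss' (B + x)) as [I1 I2]; auto; try lia; try lra.
      simpl. split. lra. intro Hne. assert (r <> ss') by congruence. specialize (I2 H). lra.
    + assert (Hx : In x ss').
      { assert (In x (y :: ss')) by (eapply Permutation_in; eauto; simpl; auto).
        destruct H; [congruence|auto]. }
      assert (oyx : ord y x) by (rewrite Forall_forall in Hord; auto).
      destruct (in_split _ _ Hx) as [l1 [l2 E]]. subst ss'.
      set (t := l1 ++ l2).
      assert (Pr : Permutation r (y :: t)).
      { change (Permutation (x :: r) ((y :: l1) ++ x :: l2)) in Hperm. change (Permutation r ((y :: l1) ++ l2)). eapply Permutation_cons_app_inv; exact Hperm. }
      assert (Hst : StronglySorted ord (y :: t)).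
      { apply (SS_remove ord (y :: l1) x l2). constructor; auto. }
      assert (y0 : 0 < y) by (apply rpos; eapply Permutation_in; [apply Permutation_sym; eauto|simpl; auto]).
      assert (tpos : forall c, In c t -> 0 < c).
      { intros c Hc. apply rpos. eapply Permutation_in; [apply Permutation_sym; eauto|simpl; auto]. }
      assert (st0 := sumR_pos t tpos).
      assert (Sr : sumR r = y + sumR t) by (rewrite (sumR_perm _ _ Pr); reflexivity).
      destruct (IH r (y :: t) (B + x)) as [J1 _]; auto; try lia; try lra.
      destruct (IH (x :: t) (l1 ++ x :: l2) (B + y)) as [K1 _]; auto.
      { rewrite (Permutation_length Pr) in Hlen. simpl in *. lia. }
      { apply Permutation_middle. }
      { intros c [<-|Hc]; auto. }
      { lra. }
      { simpl. lra. }
      assert (Sw := Hswap B x y HB x0 y0 ltac:(lra) oyx).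
      simpl in J1, K1 |- *.
      replace (B + y + x) with (B + x + y) in K1 by ring.
      split; [|intros _]; lra.
Qed.

Lemma Qf_map (p : R -> R) (a : nat -> R) (l : list nat) (st : R) :
  Qf p (map a l) st = sumR (map (fun k => a (nth k l 0%nat) * RInt p 0 (st + sumR (firstn (S k) (map a l)))) (seq 0 (length l))).
Proof.
  revert st; induction l as [|x r IH]; intro st. reflexivity.
  change (Qf p (map a (x::r)) st) with (a x * RInt p 0 (st + a x) + Qf p (map a r) (st + a x)).
  change (length (x::r)) with (S (length r)).
  change (seq 0 (S (length r))) with (0%nat :: seq 1 (length r)).
  rewrite <- seq_shift, map_cons, map_map.
  change (sumR (?h :: ?t)) with (h + sumR t).
  rewrite IH. f_equal.
  - rewrite map_cons. simpl nth. rewrite firstn_cons. simpl firstn.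
    change (sumR (a x :: nil)) with (a x + 0). rewrite Rplus_0_r. reflexivity.
  - f_equal. apply map_ext. intro k. simpl nth. rewrite map_cons, firstn_cons.
    change (sumR (a x :: ?t)) with (a x + sumR t). rewrite Rplus_assoc. reflexivity.
Qed.

Lemma exp_le_exp x y : x <= y -> exp x <= exp y.
Proof. intros [H|<-]. left; apply exp_increasing; auto. right; reflexivity. Qed.

Lemma exp_lip u v : 0 <= u -> 0 <= v -> Rabs (exp (- u) - exp (- v)) <= Rabs (u - v).
Proof.
  assert (W : forall u v, 0 <= u -> u <= v -> Rabs (exp (- u) - exp (- v)) <= Rabs (u - v)).
  { clear. intros u v Hu Huv.
    assert (E : exp (- v) = exp (- u) * exp (- (v - u))) by (rewrite <- exp_plus; f_equal; ring).
    assert (E1 : exp (- u) <= 1) by (rewrite <- exp_0; apply exp_le_exp; lra).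
    assert (E2 : exp (- (v - u)) <= 1) by (rewrite <- exp_0; apply exp_le_exp; lra).
    assert (E3 := exp_ineq1_le (- (v - u))).
    assert (E4 := exp_pos (- u)).
    rewrite E, Rabs_right, (Rabs_left1 (u - v)) by nra. nra. }
  intros Hu Hv. destruct (Rle_dec u v). apply W; auto.
  rewrite Rabs_minus_sym, (Rabs_minus_sym u). apply W; lra.
Qed.

Lemma dens_int (lam : R -> R) Tot : 0 <= Tot -> (forall t, 0 <= t -> 0 <= lam t) ->
  (forall t, 0 <= t -> ex_RInt lam 0 t) ->
  ex_RInt (dens lam) 0 Tot /\ ex_RInt (fun s => s * dens lam s) 0 Tot.
Proof.
  intros HT Hnn Hint.
  destruct (ex_RInt_ub lam 0 Tot (Hint Tot HT)) as [M0 HM0].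
  set (M := Rmax M0 0).
  assert (HM : forall t, 0 <= t <= Tot -> Rabs (lam t) <= M).
  { intros t Ht. eapply Rle_trans. apply (HM0 t). rewrite Rmin_left, Rmax_right; lra. apply Rmax_l. }
  assert (M_pos : 0 <= M) by apply Rmax_r.
  clearbody M. clear HM0.
  assert (Lpos : forall t, 0 <= t -> 0 <= Lam lam t).
  { intros t Ht. apply RInt_ge_0; auto. intros; apply Hnn; lra. }
  assert (Llip1 : forall x y, 0 <= y -> y <= x -> x <= Tot -> Rabs (Lam lam x - Lam lam y) <= M * Rabs (x - y)).
  { intros x y Hy Hyx Hx. unfold Lam. rewrite <- (RInt_sub_eq lam Tot y x) by auto.
    rewrite (Rabs_right (x - y)) by lra. rewrite Rmult_comm.
    apply abs_RInt_le_const; auto. apply ex_RInt_sub with 0 Tot; auto; lra.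
    intros; apply HM; lra. }
  assert (Llip : forall x y, 0 <= x <= Tot -> 0 <= y <= Tot -> Rabs (Lam lam x - Lam lam y) <= M * Rabs (x - y)).
  { intros x y Hx Hy. destruct (Rle_dec y x). apply Llip1; lra.
    rewrite Rabs_minus_sym, (Rabs_minus_sym x). apply Llip1; lra. }
  set (G := fun s => exp (- Lam lam s)).
  assert (Glip : forall x y, 0 <= x <= Tot -> 0 <= y <= Tot -> Rabs (G x - G y) <= M * Rabs (x - y)).
  { intros x y Hx Hy. unfold G. eapply Rle_trans. apply exp_lip; apply Lpos; lra. apply Llip; auto. }
  assert (G1 : forall x, 0 <= x -> 0 <= G x <= 1).
  { intros x Hx. unfold G. split. left; apply exp_pos. rewrite <- exp_0. apply exp_le_exp.
    assert (0 <= Lam lam x) by auto. lra. }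
  split.
  - apply (mult_lip lam G 0 Tot HT (Hint Tot HT)). exists M. auto.
  - apply (ex_RInt_ext (V:=R_NormedModule)) with (fun s => lam s * (s * G s)).
    { intros x Hx. unfold dens, G. rewrite <- Rmult_assoc, (Rmult_comm (lam x) x), Rmult_assoc. reflexivity. }
    apply (mult_lip lam (fun s => s * G s) 0 Tot HT (Hint Tot HT)).
    exists (1 + Tot * M). intros x y Hx Hy.
    replace (x * G x - y * G y) with ((x - y) * G x + y * (G x - G y)) by ring.
    eapply Rle_trans. apply Rabs_triang. rewrite !Rabs_mult.
    assert (A1 := G1 x ltac:(lra)). assert (A2 := Glip x y Hx Hy).
    rewrite (Rabs_right (G x)) by lra. rewrite (Rabs_right y) by lra.
    assert (A3 := Rabs_pos (x - y)).
    assert (A4 : y * Rabs (G x - G y) <= Tot * (M * Rabs (x - y))).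
    { apply Rmult_le_compat; try lra. apply Rabs_pos. }
    nra.
Qed.

Lemma RInt_const_R (a b c : R) : RInt (fun _ => c) a b = (b - a) * c.
Proof. rewrite (RInt_const (V:=R_CompleteNormedModule)). reflexivity. Qed.

Lemma const_le_RInt (p : R -> R) a b c : a <= b -> ex_RInt p a b ->
  (forall x, a < x < b -> c <= p x) -> (b - a) * c <= RInt p a b.
Proof.
  intros. rewrite <- RInt_const_R. apply RInt_le; auto. apply ex_RInt_const.
Qed.

Lemma RInt_le_const (p : R -> R) a b c : a <= b -> ex_RInt p a b ->
  (forall x, a < x < b -> p x <= c) -> RInt p a b <= (b - a) * c.
Proof.
  intros. rewrite <- RInt_const_R. apply RInt_le; auto. apply ex_RInt_const.
Qed.

Lemma swap_dec (p : R -> R) Tot (Hp : ex_RInt p 0 Tot)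
  (Hdec : forall x y, 0 <= x -> x < y -> y <= Tot -> p y < p x) :
  forall B x y, 0 <= B -> 0 < x -> 0 < y -> B + x + y <= Tot -> y < x ->
     y * RInt p 0 (B + y) + x * RInt p 0 (B + x + y) < x * RInt p 0 (B + x) + y * RInt p 0 (B + x + y).
Proof.
  intros B x y HB Hx Hy HT Hyx.
  set (w := B + x + y). set (u := B + y). set (v := B + x).
  set (m := (u + v) / 2).
  assert (E1 := RInt_sub_eq p Tot u v ltac:(unfold u; lra) ltac:(unfold u, v; lra) ltac:(unfold v; lra) Hp).
  assert (E2 := RInt_sub_eq p Tot v w ltac:(unfold v; lra) ltac:(unfold v, w; lra) ltac:(unfold w; lra) Hp).
  assert (E3 := RInt_sub_eq p Tot u m ltac:(unfold u; lra) ltac:(unfold m, u, v; lra) ltac:(unfold m, u, v; lra) Hp).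
  assert (E4 := RInt_sub_eq p Tot m v ltac:(unfold m, u, v; lra) ltac:(unfold m, u, v; lra) ltac:(unfold v; lra) Hp).
  assert (L1 : (m - u) * p m <= RInt p u m).
  { apply const_le_RInt. unfold m, u, v; lra. apply ex_RInt_sub with 0 Tot; unfold m, u, v in *; auto; lra.
    intros z Hz. left. apply Hdec; unfold m, u, v in *; lra. }
  assert (L2 : (v - m) * p v <= RInt p m v).
  { apply const_le_RInt. unfold m, u, v; lra. apply ex_RInt_sub with 0 Tot; unfold m, u, v in *; auto; lra.
    intros z Hz. left. apply Hdec; unfold m, u, v in *; lra. }
  assert (L3 : RInt p v w <= (w - v) * p v).
  { apply RInt_le_const. unfold v, w; lra. apply ex_RInt_sub with 0 Tot; unfold w, v in *; auto; lra.
    intros z Hz. left. apply Hdec; unfold w, v in *; lra. }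
  assert (L4 : p v < p m) by (apply Hdec; unfold m, u, v; lra).
  assert (L5 : (m - u) * p v < (m - u) * p m) by (apply Rmult_lt_compat_l; [unfold m, u, v; lra | exact L4]).
  set (I1 := RInt p u v) in *. set (I2 := RInt p v w) in *.
  assert (F1 : (x - y) * p v < I1).
  { replace (x - y) with ((m - u) + (v - m)) by (unfold m, u, v; field). lra. }
  assert (F1' : y * ((x - y) * p v) < y * I1) by (apply Rmult_lt_compat_l; lra).
  assert (F2' : (x - y) * I2 <= (x - y) * (y * p v)).
  { apply Rmult_le_compat_l. lra. replace (w - v) with y in L3 by (unfold w, v; ring). exact L3. }
  assert (Eq : x * RInt p 0 v + y * RInt p 0 w - (y * RInt p 0 u + x * RInt p 0 w)
     = y * (RInt p 0 v - RInt p 0 u) - (x - y) * (RInt p 0 w - RInt p 0 v)) by ring.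
  rewrite <- E1, <- E2 in Eq. fold I1 I2 in Eq.
  assert (y * ((x - y) * p v) = (x - y) * (y * p v)) by ring.
  lra.
Qed.

Lemma swap_inc (p : R -> R) Tot (Hp : ex_RInt p 0 Tot)
  (Hinc : forall x y, 0 <= x -> x < y -> y <= Tot -> p x < p y) :
  forall B x y, 0 <= B -> 0 < x -> 0 < y -> B + x + y <= Tot -> Rgt y x ->
     y * RInt p 0 (B + y) + x * RInt p 0 (B + x + y) < x * RInt p 0 (B + x) + y * RInt p 0 (B + x + y).
Proof.
  intros B x y HB Hx Hy HT Hyx. unfold Rgt in Hyx.
  set (w := B + x + y). set (u := B + x). set (v := B + y).
  set (m := (u + v) / 2).
  assert (E1 := RInt_sub_eq p Tot u v ltac:(unfold u; lra) ltac:(unfold u, v; lra) ltac:(unfold v; lra) Hp).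
  assert (E2 := RInt_sub_eq p Tot v w ltac:(unfold v; lra) ltac:(unfold v, w; lra) ltac:(unfold w; lra) Hp).
  assert (E3 := RInt_sub_eq p Tot u m ltac:(unfold u; lra) ltac:(unfold m, u, v; lra) ltac:(unfold m, u, v; lra) Hp).
  assert (E4 := RInt_sub_eq p Tot m v ltac:(unfold m, u, v; lra) ltac:(unfold m, u, v; lra) ltac:(unfold v; lra) Hp).
  assert (L1 : RInt p u m <= (m - u) * p m).
  { apply RInt_le_const. unfold m, u, v; lra. apply ex_RInt_sub with 0 Tot; unfold m, u, v in *; auto; lra.
    intros z Hz. left. apply Hinc; unfold m, u, v in *; lra. }
  assert (L2 : RInt p m v <= (v - m) * p v).
  { apply RInt_le_const. unfold m, u, v; lra. apply ex_RInt_sub with 0 Tot; unfold m, u, v in *; auto; lra.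
    intros z Hz. left. apply Hinc; unfold m, u, v in *; lra. }
  assert (L3 : (w - v) * p v <= RInt p v w).
  { apply const_le_RInt. unfold v, w; lra. apply ex_RInt_sub with 0 Tot; unfold w, v in *; auto; lra.
    intros z Hz. left. apply Hinc; unfold w, v in *; lra. }
  assert (L4 : p m < p v) by (apply Hinc; unfold m, u, v; lra).
  assert (L5 : (m - u) * p m < (m - u) * p v) by (apply Rmult_lt_compat_l; [unfold m, u, v; lra | exact L4]).
  set (I1 := RInt p u v) in *. set (I2 := RInt p v w) in *.
  assert (F1 : I1 < (y - x) * p v).
  { replace (y - x) with ((m - u) + (v - m)) by (unfold m, u, v; field). lra. }
  assert (F1' : x * I1 < x * ((y - x) * p v)) by (apply Rmult_lt_compat_l; lra).
  assert (F2' : (y - x) * (x * p v) <= (y - x) * I2).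
  { apply Rmult_le_compat_l. lra. replace (w - v) with x in L3 by (unfold w, v; ring). exact L3. }
  assert (Eq : x * RInt p 0 u + y * RInt p 0 w - (y * RInt p 0 v + x * RInt p 0 w)
     = (y - x) * (RInt p 0 w - RInt p 0 v) - x * (RInt p 0 v - RInt p 0 u)) by ring.
  rewrite <- E1, <- E2 in Eq. fold I1 I2 in Eq.
  assert (x * ((y - x) * p v) = (y - x) * (x * p v)) by ring.
  lra.
Qed.

Lemma a_mono (n : nat) (a : nat -> R) (ha_incr : forall i : nat, (S i < n)%nat -> a i < a (S i)) :
  forall i j, (i < j)%nat -> (j < n)%nat -> a i < a j.
Proof.
  intros i j. induction j as [|j IH]; intros Hij Hj. lia.
  destruct (Nat.eq_dec i j) as [->|Hne]. apply ha_incr; auto.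
  apply Rlt_trans with (a j). apply IH; lia. apply ha_incr; auto.
Qed.

Lemma SS_seq (n : nat) (a : nat -> R) (ha_incr : forall i : nat, (S i < n)%nat -> a i < a (S i)) :
  forall m k, (k + m <= n)%nat -> StronglySorted Rlt (map a (seq k m)).
Proof.
  induction m as [|m IH]; intros k Hk; simpl. constructor.
  constructor. apply IH; lia.
  rewrite Forall_forall. intros z Hz. apply in_map_iff in Hz as [j [<- Hj]].
  apply in_seq in Hj. apply (a_mono n a ha_incr); lia.
Qed.

Lemma SS_app (ord : R -> R -> Prop) l1 l2 : StronglySorted ord l1 -> StronglySorted ord l2 ->
  (forall x y, In x l1 -> In y l2 -> ord x y) -> StronglySorted ord (l1 ++ l2).
Proof.
  induction l1 as [|x l1 IH]; intros H1 H2 H; simpl; auto.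
  apply StronglySorted_inv in H1 as [H1 F]. constructor.
  apply IH; auto. intros; apply H; simpl; auto.
  rewrite Forall_forall in *. intros z Hz. apply in_app_or in Hz as [Hz|Hz]; auto.
  apply H; simpl; auto.
Qed.

Lemma SS_rev l : StronglySorted Rlt l -> StronglySorted Rgt (rev l).
Proof.
  induction l as [|x l IH]; intros H; simpl. constructor.
  apply StronglySorted_inv in H as [H F]. apply SS_app; auto.
  repeat constructor.
  intros z y Hz [<-|[]]. rewrite <- in_rev in Hz. rewrite Forall_forall in F.
  unfold Rgt. auto.
Qed.

Lemma map_inj (a : nat -> R) (l1 l2 : list nat) :
  (forall i j, In i l1 -> In j l2 -> a i = a j -> i = j) -> map a l1 = map a l2 -> l1 = l2.
Proof.
  revert l2; induction l1 as [|x l1 IH]; intros [|y l2] H E; simpl in E; try discriminate; auto.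
  injection E as E1 E2. f_equal. apply H; simpl; auto.
  apply IH; auto. intros; apply H; simpl; auto.
Qed.

Lemma sumR_map_minus (f g : nat -> R) s :
  sumR (map f s) - sumR (map g s) = sumR (map (fun k => f k - g k) s).
Proof. induction s as [|x s IH]; simpl; [ring|]. unfold sumR in *; simpl. lra. Qed.

Theorem theorem4 (n : nat) (a : nat -> R) (lam : R -> R)
  (ha_pos : forall i : nat, (i < n)%nat -> 0 < a i)
  (ha_incr : forall i : nat, (S i < n)%nat -> a i < a (S i))
  (hlam_nonneg : forall t : R, 0 <= t -> 0 <= lam t)
  (hlam_int : forall t : R, 0 <= t -> ex_RInt lam 0 t) :
  let id_ord := seq 0 n in
  let An := sumR (lens a id_ord) in
  (forall l : list nat, Permutation l id_ord ->
     ET a lam id_ord - ET a lam l =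
     sumR (map (fun k =>
       a (nth k id_ord 0%nat) * RInt (dens lam) 0 (Apref a id_ord (S k))
       - a (nth k l 0%nat) * RInt (dens lam) 0 (Apref a l (S k))) id_ord))
  /\
  ((forall x y : R, 0 <= x -> x < y -> y <= An -> dens lam y < dens lam x) ->
   forall l : list nat, Permutation l id_ord -> l <> id_ord ->
     ET a lam id_ord < ET a lam l)
  /\
  ((forall x y : R, 0 <= x -> x < y -> y <= An -> dens lam x < dens lam y) ->
   forall l : list nat, Permutation l id_ord -> l <> rev id_ord ->
     ET a lam (rev id_ord) < ET a lam l).
Proof.
  cbv zeta.
  set (id_ord := seq 0 n). set (An := sumR (lens a id_ord)).
  set (p := dens lam).
  assert (Hin : forall l, Permutation l id_ord -> forall i, In i l -> (i < n)%nat).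
  { intros l Hl i Hi. apply (Permutation_in _ Hl) in Hi. unfold id_ord in Hi. apply in_seq in Hi. lia. }
  assert (Hpos : forall l, Permutation l id_ord -> forall c, In c (lens a l) -> 0 < c).
  { intros l Hl c Hc. unfold lens in Hc. apply in_map_iff in Hc as [i [<- Hi]]. apply ha_pos. eauto. }
  assert (Hsum : forall l, Permutation l id_ord -> sumR (lens a l) = An).
  { intros l Hl. apply sumR_perm. apply Permutation_map. auto. }
  assert (An0 : 0 <= An).
  { apply sumR_nonneg. intros c Hc. left. apply (Hpos id_ord (Permutation_refl _)); auto. }
  destruct (dens_int lam An An0 hlam_nonneg hlam_int) as [Hp Hsp].
  set (K := RInt (fun s => s * p s) 0 An - RInt (fun s => s * p s) 0 0 - An * RInt p 0 0
            + An * exp (- Lam lam An)).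
  assert (ETf : forall l, Permutation l id_ord -> ET a lam l = K + Qf p (lens a l) 0).
  { intros l Hl. unfold ET. cbv zeta. fold p. rewrite (Hsum l Hl).
    assert (H := compl_int p An Hp Hsp (lens a l) 0
      ltac:(intros c Hc; left; eapply Hpos; eauto) (Rle_refl 0) ltac:(rewrite (Hsum l Hl); lra)).
    rewrite (Hsum l Hl), Rplus_0_l in H.
    rewrite (is_RInt_unique (V:=R_CompleteNormedModule) _ _ _ _ H). unfold K, p. ring. }
  assert (Hlen : forall l, Permutation l id_ord -> length l = n).
  { intros l Hl. rewrite (Permutation_length Hl). unfold id_ord. apply length_seq. }
  assert (Hinj : forall l1 l2, Permutation l1 id_ord -> Permutation l2 id_ord ->
     l1 <> l2 -> lens a l1 <> lens a l2).
  { intros l1 l2 H1 H2 Hne E. apply Hne. apply (map_inj a); auto.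
    intros i j Hi Hj Eij. assert (i < n)%nat by eauto. assert (j < n)%nat by eauto.
    destruct (Nat.lt_trichotomy i j) as [Hlt|[Heq|Hlt]]; auto.
    - pose proof (a_mono n a ha_incr i j Hlt ltac:(lia)). lra.
    - pose proof (a_mono n a ha_incr j i Hlt ltac:(lia)). lra. }
  split; [|split].
  - intros l Hl. rewrite (ETf l Hl), (ETf id_ord (Permutation_refl _)).
    rewrite !Qf_map. rewrite (Hlen l Hl), (Hlen id_ord (Permutation_refl _)).
    replace (K + sumR (map (fun k => a (nth k id_ord 0%nat) * RInt p 0 (0 + sumR (firstn (S k) (map a id_ord))))
      (seq 0 n)) - (K + sumR (map (fun k => a (nth k l 0%nat) * RInt p 0 (0 + sumR (firstn (S k) (map a l))))
      (seq 0 n)))) with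
      (sumR (map (fun k => a (nth k id_ord 0%nat) * RInt p 0 (0 + sumR (firstn (S k) (map a id_ord))))
      (seq 0 n)) - sumR (map (fun k => a (nth k l 0%nat) * RInt p 0 (0 + sumR (firstn (S k) (map a l))))
      (seq 0 n))) by ring.
    rewrite sumR_map_minus. f_equal. apply map_ext. intro k.
    rewrite !Rplus_0_l. reflexivity.
  - intros Hdec l Hl Hne. rewrite (ETf l Hl), (ETf id_ord (Permutation_refl _)).
    apply Rplus_lt_compat_l.
    destruct (Qf_sorted p An Rlt (swap_dec p An Hp Hdec) (length (lens a l)) (lens a l) (lens a id_ord) 0)
      as [_ H]; auto.
    + apply Permutation_map; auto.
    + apply (SS_seq n a ha_incr). lia.
    + eapply Hpos; eauto.
    + lra.
    + rewrite Hsum; auto; lra.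
  - intros Hinc l Hl Hne.
    assert (Hr : Permutation (rev id_ord) id_ord) by (apply Permutation_sym, Permutation_rev).
    rewrite (ETf l Hl), (ETf (rev id_ord) Hr).
    apply Rplus_lt_compat_l.
    destruct (Qf_sorted p An Rgt (swap_inc p An Hp Hinc) (length (lens a l)) (lens a l) (lens a (rev id_ord)) 0)
      as [_ H]; auto.
    + apply Permutation_map. eapply perm_trans; eauto. apply Permutation_sym; auto.
    + unfold lens. rewrite map_rev. apply SS_rev. apply (SS_seq n a ha_incr). lia.
    + eapply Hpos; eauto.
    + lra.
    + rewrite Hsum; auto; lra.
Qed.
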